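(* For all positive integers $m,n$ and any $(A,\boldsymbol{\gamma})\in[0,1)^{m\times n}\times[0,1)^m$, we have $\mathcal{C}(A,\boldsymbol{\gamma})\neq\emptyset$ if and only if $(A,\boldsymbol{\gamma})\notin\mathbf{Bad}(m,n)$.
   Context: $[0,1)^{m\times n}$ is the set of real $m\times n$ matrices with entries in $[0,1)$. For $\boldsymbol{x}\in\mathbb{R}^n$, $\|\boldsymbol{x}\|=\max_i|x_i|$; for $\boldsymbol{y}\in\mathbb{R}^m$, $\langle\boldsymbol{y}\rangle=\min_{\boldsymbol{p}\in\mathbb{Z}^m}\|\boldsymbol{y}-\boldsymbol{p}\|$. ''Decreasing'' means non-increasing. $\mathcal{C}$ is the set of decreasing $\psi:\mathbb{N}\to[0,\infty)$ with $\sum_{q\ge1}q^{n-1}\psi(q)^m<\infty$. $\mathcal{C}(A,\boldsymbol{\gamma})=\{\psi\in\mathcal{C}:\langle A\boldsymbol{q}-\boldsymbol{\gamma}\rangle<\psi(\|\boldsymbol{q}\|)\text{ for infinitely many }\boldsymbol{q}\in\mathbb{Z}^n\}$. $\mathbf{Bad}(m,n)=\{(A,\boldsymbol{\gamma}):\liminf_{\boldsymbol{q}\in\mathbb{Z}^n,\|\boldsymbol{q}\|\to\infty}\|\boldsymbol{q}\|^n\langle A\boldsymbol{q}-\boldsymbol{\gamma}\rangle^m>0\}$. *)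

(* Defs.v *)
From HB Require Import structures.
From mathcomp Require Import all_boot all_order all_algebra.
From mathcomp Require Import all_classical all_reals all_analysis.
Set Implicit Arguments. Unset Strict Implicit. Unset Printing Implicit Defensive.
Import Order.TTheory GRing.Theory Num.Theory.
Import numFieldNormedType.Exports.
Local Open Scope classical_set_scope.
Local Open Scope ring_scope.

Definition znorm (n : nat) (q : 'cV[int]_n) : nat := \max_(i < n) `|q i ord0|%N.

Definition supnorm (R : realType) (m : nat) (y : 'cV[R]_m) : R :=
  \big[Num.max/0]_(i < m) `|y i ord0|.

(* <y> = min_{p in Z^m} ||y - p|| (the minimum exists; written as inf) *)
Definition dZ (R : realType) (m : nat) (y : 'cV[R]_m) : R :=
  inf [set supnorm (y - map_mx (fun z : int => z%:~R) p) | p in [set: 'cV[int]_m]].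

Definition affv (R : realType) (m n : nat) (A : 'M[R]_(m, n)) (g : 'cV[R]_m)
  (q : 'cV[int]_n) : 'cV[R]_m :=
  A *m map_mx (fun z : int => z%:~R) q - g.

Definition unit_mx (R : realType) (m n : nat) (A : 'M[R]_(m, n)) : Prop :=
  forall i j, 0 <= A i j /\ A i j < 1.

Definition classC (R : realType) (m n : nat) (psi : nat -> R) : Prop :=
  (forall q, 0 <= psi q) /\
  (forall i j, (i <= j)%N -> psi j <= psi i) /\
  cvgn (series (fun k : nat => (k.+1)%:R ^+ (n - 1) * psi k.+1 ^+ m)).

Definition classCA (R : realType) (m n : nat) (A : 'M[R]_(m, n)) (g : 'cV[R]_m)
  : set (nat -> R) :=
  [set psi | classC m n psi /\
     infinite_set [set q : 'cV[int]_n | dZ (affv A g q) < psi (znorm q)]].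

Definition liminf_znorm (R : realType) (n : nat) (f : 'cV[int]_n -> R) : \bar R :=
  ereal_sup [set ereal_inf [set (f q)%:E | q in [set q | (N <= znorm q)%N]]
            | N in [set: nat]].

Definition Bad (R : realType) (m n : nat) : set ('M[R]_(m, n) * 'cV[R]_m) :=
  [set Ag | (0 < liminf_znorm
       (fun q : 'cV[int]_n => ((znorm q)%:R ^+ n * dZ (affv Ag.1 Ag.2 q) ^+ m)%R))%E].
Arguments Bad {R} m n.

(* Main.v *)
Require Import Defs.
From HB Require Import structures.
From mathcomp Require Import all_boot all_order all_algebra.
From mathcomp Require Import all_classical all_reals all_analysis.
From mathcomp Require Import ring lra zify.
Import Order.TTheory GRing.Theory Num.Theory.
Import numFieldNormedType.Exports.
Local Open Scope classical_set_scope.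
Local Open Scope ring_scope.
Lemma decay (R : realType) (m n : nat) (hn : (0 < n)%N) (psi : nat -> R) :
  classC m n psi -> forall c : R, 0 < c ->
  exists K, forall k, (K <= k)%N -> k%:R ^+ n * psi k ^+ m < c.
Proof.
move=> [p0 [pdec pcv]] c c0.
move: pcv => /cvg_ex [l /cvgrPdist_lt Hl].
set u := (fun k : nat => _) in Hl.
have e0 : 0 < c / (2 * 3 ^+ n) by rewrite divr_gt0 // mulr_gt0 // exprn_gt0.
have [H _ HH] := Hl _ e0.
exists (H.*2 + 2)%N => k Hk.
set h := k./2.
have hH : (H <= h)%N by rewrite /h; move: Hk; rewrite -(odd_double_half k); case: (odd k) => /=; lia.
have h1 : (1 <= h)%N by rewrite /h; move: Hk; rewrite -(odd_double_half k); case: (odd k) => /=; lia.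
have h2k : (h.*2 <= k)%N by rewrite /h; rewrite -[X in (_ <= X)%N](odd_double_half k); case: (odd k) => /=; lia.
have k3h : (k <= 3 * h)%N by rewrite /h; rewrite -[X in (X <= _)%N](odd_double_half k); move: h1; rewrite /h; case: (odd k) => /=; lia.
have key : h%:R ^+ n * psi h.*2 ^+ m <= series u h.*2 - series u h.
  rewrite sub_series_geq; last by lia.
  apply: (@le_trans _ _ (\sum_(h <= i < h.*2) (h%:R ^+ (n - 1) * psi h.*2 ^+ m))).
    rewrite sumr_const_nat.
    have -> : (h.*2 - h = h)%N by lia.
    by rewrite -[X in _ <= X]mulr_natr mulrAC -exprSr subn1 prednK.
  apply: ler_sum_nat => i /andP [hi ih].
  rewrite /u; apply: ler_pM.
  - by rewrite exprn_ge0.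
  - by rewrite exprn_ge0.
  - by rewrite lerXn2r ?nnegrE ?ler_nat //; lia.
  - by rewrite lerXn2r ?nnegrE //; apply: pdec; lia.
have bound : series u h.*2 - series u h < c / 3 ^+ n.
  have A1 := HH h hH.
  have A2 := HH h.*2 ltac:(rewrite /=; lia).
  move: A1 A2; rewrite /= !ltr_norml => /andP [a1 a2] /andP [a3 a4].
  have E : c / 3 ^+ n = 2 * (c / (2 * 3 ^+ n)).
    by field; rewrite expf_neq0.
  rewrite E; lra.
have n3 : 0 < (3 : R) ^+ n by rewrite exprn_gt0.
apply: (@le_lt_trans _ _ ((3 : R) ^+ n * (h%:R ^+ n * psi h.*2 ^+ m))).
  rewrite mulrA -exprMn; apply: ler_pM.
  - by rewrite exprn_ge0.
  - by rewrite exprn_ge0.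
  - by rewrite lerXn2r ?nnegrE // -natrM ler_nat.
  - by rewrite lerXn2r ?nnegrE //; apply: pdec.
have := ler_pM2l n3; move=> HM.
apply: (@le_lt_trans _ _ ((3 : R) ^+ n * (series u h.*2 - series u h))).
  by rewrite ler_pM2l.
rewrite -ltr_pdivlMl // mulrC.
done.
Qed.
Lemma sum_ifcut (R : realType) (w : R) (T N : nat) :
  \sum_(k < N) (if (k < T)%N then w else 0) = w *+ minn N T.
Proof.
elim: N => [|N IH]; first by rewrite big_ord0 min0n.
rewrite big_ord_recr /= IH.
case: (ltnP N T) => H.
  by rewrite (minn_idPl H) mulrS addrC.
by rewrite (minn_idPr (leqW H)) addr0.
Qed.

Lemma geom_sum (R : realType) (N : nat) :
  \sum_(i < N) ((2 : R) ^+ i.+1)^-1 = 1 - ((2 : R) ^+ N)^-1.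
Proof.
elim: N => [|N IH]; first by rewrite big_ord0 expr0 invr1 subrr.
rewrite big_ord_recr /= IH exprS.
have h2 : (2 : R) ^+ N != 0 by rewrite expf_neq0.
by field.
Qed.

Lemma construct (R : realType) (m n : nat) (hm : (0 < m)%N) (hn : (0 < n)%N)
  (t : nat -> nat) (d : nat -> R) :
  (0 < t 0)%N -> (forall k, t k < t k.+1)%N -> (forall k, 0 <= d k) ->
  (forall k, d k.+1 <= d k) ->
  (forall k, (t k)%:R ^+ n * d k ^+ m <= ((2 : R) ^+ k.+1)^-1) ->
  exists psi : nat -> R, classC m n psi /\ forall k, psi (t k) = d k.
Proof.
move=> t0 tS d0 dS dsm.
have tmono : {homo t : i j / (i < j)%N} by apply: homo_ltn => //; apply: ltn_trans.
have tle : {mono t : i j / (i <= j)%N} by apply: leq_mono.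
have tlt : {mono t : i j / (i < j)%N} by move=> i j; rewrite !ltnNge tle.
have tge : forall k, (k < t k)%N.
  by elim=> [//|k IH]; apply: leq_ltn_trans (tS k).
have dmono : forall i j, (i <= j)%N -> d j <= d i.
  move=> i j; elim: j => [|j IH]; first by rewrite leqn0 => /eqP ->.
  rewrite leq_eqVlt => /orP [/eqP -> //|]; rewrite ltnS => /IH H.
  exact: le_trans (dS j) H.
have ex : forall j, exists i, (j <= t i)%N by move=> j; exists j; apply: ltnW.
pose kc j := ex_minn (ex j).
have kcP : forall j i, (t i < j)%N = (i < kc j)%N.
  move=> j i; rewrite /kc; case: ex_minnP => k Hk Hmin.
  apply/idP/idP => H.
    rewrite ltnNge; apply/negP => Hki.
    have Htk : (t k <= t i)%N by rewrite tle.
    by move: (leq_trans Hk Htk); rewrite leqNgt H.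
  rewrite ltnNge; apply/negP => Hji.
  by move: (Hmin _ Hji); rewrite leqNgt H.
have kct : forall k, kc (t k) = k.
  move=> k; apply/eqP; rewrite eqn_leq; apply/andP; split.
    by rewrite leqNgt -kcP ltnn.
  by rewrite leqNgt -tlt kcP ltnn.
have kcmono : forall i j, (i <= j)%N -> (kc i <= kc j)%N.
  move=> i j ij; rewrite leqNgt; apply/negP => H.
  move: H; rewrite -kcP => H1.
  have : (t (kc j) < j)%N by apply: leq_trans H1 ij.
  by rewrite kcP ltnn.
have kcle : forall j, (kc j.+1 <= j)%N.
  by move=> j; rewrite leqNgt -kcP ltnS -ltnNge; exact: tge.
have kcge : forall j, (j <= t (kc j))%N.
  by move=> j; rewrite leqNgt kcP ltnn.
exists (fun j => d (kc j)); split; last by move=> k; rewrite kct.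
split; first by move=> q; apply: d0.
split; first by move=> i j ij; apply: dmono; apply: kcmono.
apply: nondecreasing_is_cvgn.
  rewrite seriesEnat; apply: nondecreasing_series => k _ _.
  by apply: mulr_ge0; rewrite exprn_ge0.
exists 1 => _ [N _ <-].
rewrite seriesEord /=.
pose w i := (t i)%:R ^+ (n-1) * d i ^+ m : R.
have w0 : forall i, 0 <= w i by move=> i; apply: mulr_ge0; rewrite exprn_ge0.
apply: (@le_trans _ _ (\sum_(k < N) \sum_(i < N) (if (k < t i)%N then w i else 0))).
  apply: ler_sum => k _.
  have Hi : (kc k.+1 < N)%N by apply: leq_ltn_trans (kcle k) (ltn_ord k).
  rewrite (bigD1 (Ordinal Hi)) //= kcge.
  rewrite -[X in X <= _]addr0; apply: lerD.
    apply: ler_wpM2r; first by rewrite exprn_ge0.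
    by rewrite lerXn2r ?nnegrE // ler_nat.
  by apply: sumr_ge0 => i _; case: ifP.
rewrite exchange_big /=.
apply: (@le_trans _ _ (\sum_(i < N) ((2:R) ^+ i.+1)^-1)); last first.
  rewrite geom_sum.
  have : 0 <= ((2:R) ^+ N)^-1 by rewrite invr_ge0 exprn_ge0.
  lra.
apply: ler_sum => i _; rewrite sum_ifcut.
apply: le_trans (dsm i).
rewrite -[X in X <= _]mulr_natr.
apply: (@le_trans _ _ (w i * (t i)%:R)).
  by apply: ler_wpM2l => //; rewrite ler_nat geq_minr.
by rewrite /w mulrAC -exprSr subn1 prednK.
Qed.
Lemma dZ_ge0 (R : realType) (m : nat) (y : 'cV[R]_m) : 0 <= dZ y.
Proof.
apply: lb_le_inf.
  by exists (supnorm (y - map_mx (fun z : int => z%:~R) 0)); exists 0.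
move=> _ [p _ <-]; rewrite /supnorm.
apply: (big_ind (fun x => 0 <= x)) => //.
  by move=> x1 x2 h1 h2; rewrite le_max h1.
Qed.

Lemma box_finite (n B : nat) : finite_set [set q : 'cV[int]_n | (znorm q < B)%N].
Proof.
pose f := fun x : 'cV['I_(B.*2.+1)]_n => map_mx (fun i : 'I_(B.*2.+1) => (i : nat)%:Z - B%:Z) x.
apply: (@sub_finite_set _ _ (f @` setT)); last by apply: finite_image; apply: finite_finset.
move=> q /= Hq.
exists (\matrix_(i, j) (inord (absz (q i j + B%:Z)) : 'I_(B.*2.+1))) => //.
apply/matrixP => i j; rewrite !mxE.
have -> : j = ord0 by apply: ord1.
have Hi : (`|q i ord0|%N <= znorm q)%N.
  by rewrite /znorm; apply: (@leq_bigmax _ (fun i => `|q i ord0|%N)).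
have H1 : (`|q i ord0|%N < B)%N by apply: leq_ltn_trans Hi Hq.
have H2 : `|q i ord0| < B%:Z by rewrite -abszE ltz_nat.
move: H2; rewrite ltr_norml => /andP [a b].
have c : 0 <= q i ord0 + B%:Z by rewrite -[B%:Z]opprK subr_ge0 ltW.
rewrite inordK; first by rewrite gez0_abs // addrK.
rewrite -ltz_nat gez0_abs //.
lia.
Qed.

Lemma unbounded (n : nat) (S : set 'cV[int]_n) :
  infinite_set S -> forall B, exists q, S q /\ (B <= znorm q)%N.
Proof.
move=> Sinf B; apply: contrapT => H; apply: Sinf.
apply: sub_finite_set (box_finite n B) => q Sq /=.
rewrite ltnNge; apply/negP => Hb; apply: H; by exists q.
Qed.
Lemma powsum (R : realType) (m : nat) (d s : R) : 0 <= d -> 0 <= s ->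
  (d + s) ^+ m <= 2 ^+ m * (d ^+ m + s ^+ m).
Proof.
move=> d0 s0.
have dm : 0 <= d ^+ m by rewrite exprn_ge0.
have sm : 0 <= s ^+ m by rewrite exprn_ge0.
have m2 : 0 <= (2 : R) ^+ m by rewrite exprn_ge0.
case: (leP d s) => h.
  apply: (@le_trans _ _ ((2 * s) ^+ m)).
    by rewrite lerXn2r ?nnegrE //; lra.
  by rewrite exprMn ler_wpM2l // lerDr.
apply: (@le_trans _ _ ((2 * d) ^+ m)).
  by rewrite lerXn2r ?nnegrE //; lra.
by rewrite exprMn ler_wpM2l // lerDl.
Qed.

Lemma step (R : realType) (T : Type) (m n : nat) (hm : (0 < m)%N)
  (nm : T -> nat) (D : T -> R) :
  (forall q, 0 <= D q) ->
  (forall N (e : R), 0 < e -> exists q, (N <= nm q)%N /\ (nm q)%:R ^+ n * D q ^+ m < e) ->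
  forall N (e eta : R), 0 < e -> 0 < eta ->
  exists q, exists del : R, [/\ (N <= nm q)%N, (0 < nm q)%N, D q < del, del <= eta
     & (nm q)%:R ^+ n * del ^+ m <= e].
Proof.
move=> D0 HD N e eta e0 eta0.
set e' := Num.min (e / 2 ^+ m.+1) ((eta / 2) ^+ m).
have e'0 : 0 < e' by rewrite lt_min !divr_gt0 ?exprn_gt0 // divr_gt0.
have e'1 : e' <= e / 2 ^+ m.+1 by rewrite /e' ge_min lexx.
have e'2 : e' <= (eta / 2) ^+ m by rewrite /e' ge_min lexx orbT.
have [q [Nq Hq]] := HD (maxn N 1) e' e'0.
move: Nq; rewrite geq_max => /andP [Nq t1].
set t := nm q in Nq t1 Hq *.
set d := D q in Hq *.
have d0 : 0 <= d := D0 q.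
have tn1 : 1 <= (t%:R : R) ^+ n by rewrite exprn_ege1 // ler1n.
have tn0 : 0 < (t%:R : R) ^+ n by lra.
have dm : d ^+ m < e'.
  apply: le_lt_trans Hq; apply: ler_peMl => //; by rewrite exprn_ge0.
have dh : d < eta / 2.
  rewrite -(ltr_pXn2r hm) ?nnegrE //; last by lra.
  exact: lt_le_trans dm e'2.
set s := Num.min (Num.min 1 (eta / 2)) (e' / t%:R ^+ n).
have s0 : 0 < s.
  by rewrite /s !lt_min ltr01 /= !divr_gt0.
have s1 : s <= 1 by rewrite /s !ge_min lexx.
have s2 : s <= eta / 2 by rewrite /s !ge_min lexx orbT.
have s3 : s <= e' / t%:R ^+ n by rewrite /s ge_min lexx orbT.
exists q, (d + s); split => //.
- rewrite -/d; lra.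
- lra.
have sm : s ^+ m <= s.
  rewrite -(prednK hm) exprS ler_piMr ?exprn_ile1 //; lra.
have ts : t%:R ^+ n * s <= e'.
  have -> : e' = t%:R ^+ n * (e' / t%:R ^+ n) by field; lra.
  by rewrite ler_wpM2l //; lra.
have tsm : t%:R ^+ n * s ^+ m <= e'.
  apply: le_trans ts; rewrite ler_wpM2l //; lra.
have P := @powsum R m d s d0 (ltW s0).
have m2 : 0 <= (2 : R) ^+ m by rewrite exprn_ge0.
have A1 : t%:R ^+ n * (d + s) ^+ m <= t%:R ^+ n * (2 ^+ m * (d ^+ m + s ^+ m)).
  by rewrite ler_wpM2l //; lra.
have A2 : t%:R ^+ n * (2 ^+ m * (d ^+ m + s ^+ m)) =
  2 ^+ m * (t%:R ^+ n * d ^+ m + t%:R ^+ n * s ^+ m) :> R by ring.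
have A3 : 2 ^+ m * (t%:R ^+ n * d ^+ m + t%:R ^+ n * s ^+ m) <= 2 ^+ m * (e' + e') :> R.
  by rewrite ler_wpM2l //; lra.
have A4 : (2 : R) ^+ m * (e' + e') <= e.
  have E : (2 : R) ^+ m * (e / 2 ^+ m.+1 + e / 2 ^+ m.+1) = e.
    by rewrite exprS; field; rewrite expf_neq0.
  by rewrite -[X in _ <= X]E ler_wpM2l //; lra.
lra.
Qed.

Theorem corollary1p3 (R : realType) (m n : nat) (hm : (0 < m)%N) (hn : (0 < n)%N)
  (A : 'M[R]_(m, n)) (g : 'cV[R]_m) :
  unit_mx A -> (forall i, 0 <= g i ord0 /\ g i ord0 < 1) ->
  (classCA A g <> set0 <-> ~ Bad m n (A, g)).
Proof.
move=> _ _.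
set D := fun q => dZ (affv A g q).
have D0 : forall q, 0 <= D q by move=> q; apply: dZ_ge0.
split.
  move=> Hne Hbad; apply: Hne; apply/seteqP; split=> [psi [Cpsi Hinf]|//].
  rewrite /Bad /liminf_znorm /= in Hbad.
  have [y [N _ <-] Hy] := ereal_sup_gt Hbad.
  set I := ereal_inf _ in Hy.
  have lbI : forall q, (N <= znorm q)%N -> (I <= ((znorm q)%:R ^+ n * D q ^+ m)%:E)%E.
    by move=> q Nq; apply: ereal_inf_lbound; exists q.
  clearbody I.
  have [c c0 Hc] : exists2 c : R, 0 < c &
      forall q, (N <= znorm q)%N -> c <= (znorm q)%:R ^+ n * D q ^+ m.
    case: I Hy lbI => [r| |] Hy lbI.
    - exists r; first by rewrite -lte_fin.
      by move=> q Nq; rewrite -lee_fin; apply: lbI.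
    - exists 1 => // q Nq.
      by have := lbI q Nq.
    - by [].
  have [K HK] := @decay R m n hn psi Cpsi c c0.
  have [q [Sq Bq]] := @unbounded n _ Hinf (maxn N K).
  move: Bq; rewrite geq_max => /andP [Nq Kq].
  have H1 := Hc q Nq.
  have H2 := HK _ Kq.
  have H3 : D q ^+ m <= psi (znorm q) ^+ m.
    have [p0 _] := Cpsi.
    by rewrite lerXn2r ?nnegrE //; apply: ltW.
  have H4 : (znorm q)%:R ^+ n * D q ^+ m <= (znorm q)%:R ^+ n * psi (znorm q) ^+ m.
    by rewrite ler_wpM2l // exprn_ge0.
  have := le_lt_trans (le_trans H1 H4) H2; by rewrite ltxx.
move=> Hnb.
have HD : forall N (e : R), 0 < e ->
    exists q, (N <= znorm q)%N /\ (znorm q)%:R ^+ n * D q ^+ m < e.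
  move=> N e e0.
  have L0 : (liminf_znorm (fun q : 'cV[int]_n => ((znorm q)%:R ^+ n * D q ^+ m)%R) <= 0)%E.
    by rewrite leNgt; apply/negP.
  set S := [set (((znorm q)%:R ^+ n * D q ^+ m)%R)%:E | q in [set q | (N <= znorm q)%N]].
  have L1 : (ereal_inf S < e%:E)%E.
    apply: le_lt_trans (_ : (0 < e%:E)%E); last by rewrite lte_fin.
    apply: le_trans L0; apply: ereal_sup_ubound; by exists N.
  have [_ [q Nq <-] Hq] := ereal_inf_lt L1.
  by exists q; split => //; rewrite -lte_fin.
have ST := @step R 'cV[int]_n m n hm (@znorm n) D D0 HD.
have Hex : forall x : nat * R * R, exists y : 'cV[int]_n * R, 0 < x.1.2 -> 0 < x.2 ->
    [/\ (x.1.1 <= znorm y.1)%N, (0 < znorm y.1)%N, D y.1 < y.2,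
        y.2 <= x.2 & (znorm y.1)%:R ^+ n * y.2 ^+ m <= x.1.2].
  move=> -[[N e] eta] /=.
  case: (pselect (0 < e)) => [e0|e0]; last first.
    by exists (0, 0) => H; exfalso; apply: e0.
  case: (pselect (0 < eta)) => [eta0|eta0]; last first.
    by exists (0, 0) => _ H; exfalso; apply: eta0.
  have [q [del H]] := ST N e eta e0 eta0.
  by exists (q, del).
have [f Hf] := choice Hex.
pose sq := fix F (k : nat) : 'cV[int]_n * R :=
  match k with
  | 0 => f (0%N, ((2 : R) ^+ 1)^-1, 1)
  | k'.+1 => f ((znorm (F k').1).+1, ((2 : R) ^+ k'.+2)^-1, (F k').2)
  end.
have sqS : forall k, sq k.+1 = f ((znorm (sq k).1).+1, ((2 : R) ^+ k.+2)^-1, (sq k).2) by [].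
have e0 : forall k, 0 < ((2 : R) ^+ k)^-1 by move=> k; rewrite invr_gt0 exprn_gt0.
have P1 : forall k, [/\ (0 < znorm (sq k).1)%N, D (sq k).1 < (sq k).2
    & (znorm (sq k).1)%:R ^+ n * (sq k).2 ^+ m <= ((2 : R) ^+ k.+1)^-1].
  elim=> [|k [_ IH2 _]].
    by have [] := Hf (0%N, ((2 : R) ^+ 1)^-1, 1) (e0 1%N) ltr01.
  have dpos : 0 < (sq k).2 by apply: le_lt_trans IH2.
  rewrite sqS.
  by have [] := Hf ((znorm (sq k).1).+1, ((2 : R) ^+ k.+2)^-1, (sq k).2) (e0 _) dpos.
have P2 : forall k, (znorm (sq k).1 < znorm (sq k.+1).1)%N /\ (sq k.+1).2 <= (sq k).2.
  move=> k; have [_ IH2 _] := P1 k.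
  have dpos : 0 < (sq k).2 by apply: le_lt_trans IH2.
  rewrite sqS.
  by have [] := Hf ((znorm (sq k).1).+1, ((2 : R) ^+ k.+2)^-1, (sq k).2) (e0 _) dpos.
have t0 : (0 < znorm (sq 0%N).1)%N by case: (P1 0%N).
have dlt : forall k, D (sq k).1 < (sq k).2 by move=> k; case: (P1 k).
have dsm : forall k, (znorm (sq k).1)%:R ^+ n * (sq k).2 ^+ m <= ((2 : R) ^+ k.+1)^-1.
  by move=> k; case: (P1 k).
have [psi [Cpsi Hpsi]] := @construct R m n hm hn (fun k => znorm (sq k).1) (fun k => (sq k).2)
  t0 (fun k => (P2 k).1)
  (fun k => le_trans (D0 _) (ltW (dlt k)))
  (fun k => (P2 k).2) dsm.
move=> E.
have : classCA A g psi; last by rewrite E.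
split => //.
move=> Fin; apply: infinite_nat.
have tmono : {homo (fun k => znorm (sq k).1) : i j / (i < j)%N}.
  by apply: homo_ltn => //; [apply: ltn_trans | move=> k; exact: (P2 k).1].
have tinj : injective (fun k => znorm (sq k).1) by apply: incn_inj; apply: leq_mono.
apply: sub_finite_set (finite_preimage (f := fun k => (sq k).1) _ Fin).
  move=> k _ /=; rewrite (Hpsi k); exact: dlt.
by move=> i j _ _ /= Hij; apply: tinj => /=; rewrite Hij.
Qed.
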